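(* A set $F$ of pairs $(K,a)$ ($K$ a graph, $a\in\mathbb{Z}_2^{*V(K)}$, taken up to isomorphism) is a full graph fibration if and only if $F(K)$ is a normal subgroup of $\mathbb{Z}_2^{*V(K)}$ for every graph $K$ and, for every injective graph homomorphism $\iota\colon H\to K$ between any two graphs, $\iota(F(H))\subset F(K)$.
   Context: Graphs are finite, undirected, without multiple edges, loops allowed, considered up to isomorphism; $N_k$ is the edgeless graph on $k$ vertices. For a set $V$, $\mathbb{Z}_2^{*V}$ is the group generated by $V$ subject to $v^2=e$; a map $\phi\colon V\to V'$ induces a homomorphism $\mathbb{Z}_2^{*V}\to\mathbb{Z}_2^{*V'}$, also denoted $\phi$. Pairs are taken up to the equivalence $(K,a)\equiv(K',\phi(a))$ for isomorphisms $\phi\colon K\to K'$, and $F(K):=\{a\mid (K,a)\in F\}$. A vertex overlap of graphs $K,H$ is a subset $f\subset V(K)\times V(H)$ in which each vertex occurs at most once; $K\cup_fH$ is the quotient of $K\sqcup H$ identifying $v$ with $w$ for $(v,w)\in f$ (an edge between two vertices of the quotient iff there is one between some representatives); $f_K,f_H$ are the induced maps into $V(K\cup_fH)$. A graph fibration is such a set $F$ with $(N_0,e),(N_1,e)\in F$ and: (F1) each $F(K)$ is empty or a normal subgroup; (F2) $\phi(F(K))=F(K)$ for every automorphism $\phi$ of $K$; (F3) if $(K,a),(H,b)\in F$ and $f$ is a vertex overlap of $K,H$, then $(K\cup_fH,f_K(a)f_H(b))\in F$. It is full if $F(K)\ne\emptyset$ for every graph $K$. *)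

(* Defs.v *)
From mathcomp Require Import all_boot.
Set Implicit Arguments. Unset Strict Implicit. Unset Printing Implicit Defensive.

(** * The group Z_2^{*V}: reduced words over V (no two consecutive letters equal). *)
Section FreeInvolutions.
Variable V : finType.

Definition reduced (s : seq V) : bool := sorted (fun x y => x != y) s.

Definition cancel_cons (x : V) (s : seq V) : seq V :=
  if s is y :: t then (if x == y then t else x :: s) else [:: x].

(* free reduction using v^2 = e *)
Definition red (s : seq V) : seq V := foldr cancel_cons [::] s.

Lemma red_reduced s : reduced (red s).
Proof.
elim: s => [|x s IH] //=.
rewrite /cancel_cons; case E: (red s) => [|y t] //.
rewrite E in IH; case: eqP => [_|/eqP nxy].
  exact: path_sorted IH.
by rewrite /reduced /= nxy.
Qed.

Definition fp := {s : seq V | reduced s}.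
Definition fp_of (s : seq V) : fp := exist _ (red s) (red_reduced s).
Definition fp1 : fp := fp_of [::].
Definition fpmul (a b : fp) : fp := fp_of (sval a ++ sval b).
Definition fpinv (a : fp) : fp := fp_of (rev (sval a)).

Definition normal_subgroup (S : fp -> Prop) : Prop :=
  [/\ S fp1,
      (forall a b, S a -> S b -> S (fpmul a b)),
      (forall a, S a -> S (fpinv a)) &
      (forall g a, S a -> S (fpmul (fpmul g a) (fpinv g)))].
End FreeInvolutions.

Definition fpmap (V V' : finType) (phi : V -> V') (a : fp V) : fp V' :=
  fp_of (map phi (sval a)).

(** * Graphs: finite, undirected, loops allowed, no multiple edges. *)
Record graph := Graph {
  vert : finType;
  adj : rel vert;
  adj_sym : symmetric adj }.
Arguments adj : clear implicits.
Arguments adj_sym : clear implicits.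

Definition edgeless (n : nat) : graph :=
  @Graph 'I_n (fun _ _ => false) (fun _ _ => erefl).

Definition graph_hom (H K : graph) (f : vert H -> vert K) : Prop :=
  forall x y, adj H x y -> adj K (f x) (f y).

Definition graph_iso (H K : graph) (f : vert H -> vert K) : Prop :=
  bijective f /\ forall x y, adj K (f x) (f y) = adj H x y.

Definition pairset := forall K : graph, fp (vert K) -> Prop.

(* F is a set of isomorphism classes of pairs: (K,a) in F iff (K',phi a) in F *)
Definition iso_invariant (F : pairset) : Prop :=
  forall K K' (phi : vert K -> vert K'), graph_iso phi ->
    forall a, F K a <-> F K' (fpmap phi a).

Definition vertex_overlap (K H : graph) (f : {set vert K * vert H}) : Prop :=
  forall p q, p \in f -> q \in f -> (p.1 == q.1) = (p.2 == q.2).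

Section Glue.
Variables (K H : graph) (f : {set vert K * vert H}).

Definition partner (w : vert H) : option (vert K) := [pick v | (v, w) \in f].
Definition unmatched (w : vert H) : bool := partner w == None.

Definition glue_vert := (vert K + {w : vert H | unmatched w})%type.

Definition glueK (v : vert K) : glue_vert := inl v.

Definition glueH (w : vert H) : glue_vert :=
  match partner w as o return partner w = o -> glue_vert with
  | Some v => fun _ => inl v
  | None => fun e => inr (exist _ w (introT eqP e))
  end erefl.

Definition glue_adj (u u' : glue_vert) : bool :=
  [exists x : vert K, exists y : vert K,
      [&& glueK x == u, glueK y == u' & adj K x y]] ||
  [exists x : vert H, exists y : vert H,
      [&& glueH x == u, glueH y == u' & adj H x y]].

Lemma glue_adj_sym : symmetric glue_adj.
Proof.
move=> u u'; rewrite /glue_adj; congr orb;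
apply/existsP/existsP => -[x /existsP[y /and3P[h1 h2 h3]]];
exists y; apply/existsP; exists x; by rewrite h1 h2 adj_sym h3.
Qed.

Definition glue : graph := @Graph glue_vert glue_adj glue_adj_sym.
End Glue.

Definition graph_fibration (F : pairset) : Prop :=
  [/\ F (edgeless 0) (fp1 _), F (edgeless 1) (fp1 _),
      (* (F1) *)
      (forall K, (forall a, ~ F K a) \/ normal_subgroup (F K)),
      (* (F2) *)
      (forall K (phi : vert K -> vert K), graph_iso phi ->
         forall b, (exists2 a, F K a & b = fpmap phi a) <-> F K b) &
      (* (F3) *)
      (forall K H (f : {set vert K * vert H}), vertex_overlap f ->
         forall a b, F K a -> F H b ->
         F (glue f) (fpmul (fpmap (@glueK K H f) a) (fpmap (glueH f) b)))].

Definition full (F : pairset) : Prop := forall K, exists a, F K a.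

Definition full_graph_fibration (F : pairset) : Prop :=
  graph_fibration F /\ full F.

(* Main.v *)
Require Import Defs.
From mathcomp Require Import all_boot.
Set Implicit Arguments. Unset Strict Implicit.

Section Aux.
Variable V : finType.

Lemma red_reduced_id (s : seq V) : reduced s -> red s = s.
Proof.
elim: s => [|x t IH] //= Hr.
have Ht : reduced t by move: Hr; rewrite /reduced; case: t {IH} => //= y t /andP[].
rewrite IH //; case: t Hr {IH Ht} => [|y t] //=.
by rewrite /reduced /= => /andP[/negbTE -> _].
Qed.

Lemma red_idem (s : seq V) : red (red s) = red s.
Proof. exact/red_reduced_id/red_reduced. Qed.

Lemma cc_invol (z : V) u : reduced u -> cancel_cons z (cancel_cons z u) = u.
Proof.
rewrite /cancel_cons; case: u => [|y t]; first by rewrite /= ?eqxx.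
case: (eqVneq z y) => [<-|nzy]; last by rewrite /= ?eqxx.
case: t => [|y' t]; first by rewrite /= ?eqxx.
by rewrite /reduced /= => /andP[/negbTE ->].
Qed.

Lemma fp_ext (a b : fp V) : sval a = sval b -> a = b.
Proof. exact: val_inj. Qed.
End Aux.

Lemma red_map (V V' : finType) (phi : V -> V') s :
  red (map phi (red s)) = red (map phi s).
Proof.
elim: s => [|x s IH] //=.
rewrite -IH; have := red_reduced s; case: (red s) => [|y t] //= Hr.
case: (eqVneq x y) => [<-|_] //=.
by rewrite cc_invol ?red_reduced.
Qed.

Lemma fpmap_comp (A B C : finType) (f : B -> C) (g : A -> B) b :
  fpmap f (fpmap g b) = fpmap (f \o g) b.
Proof. by apply: fp_ext; rewrite /= red_map map_comp. Qed.

Lemma fpmap_id (A : finType) (g : A -> A) b : g =1 id -> fpmap g b = b.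
Proof.
move=> E; apply: fp_ext; rewrite /= (eq_map E) map_id red_reduced_id //.
exact: (svalP b).
Qed.

Section GlueLem.
Variables (K H : graph) (f : {set vert K * vert H}).

Definition gspec w (x : glue_vert f) : Prop :=
  (exists v, partner f w = Some v /\ x = inl v) \/
  (exists pf, partner f w = None /\ x = inr (exist _ w pf)).

Lemma gspec_aux w o (e : partner f w = o) :
  gspec w (match o as o' return partner f w = o' -> glue_vert f with
   | Some v => fun _ => inl v
   | None => fun e => inr (exist _ w (introT eqP e)) end e).
Proof. case: o e => [v|] e; [left; by exists v | right; by eexists]. Qed.

Lemma glueH_spec w : gspec w (glueH f w).
Proof. exact: (gspec_aux (erefl _)). Qed.

Lemma partner_in w v : partner f w = Some v -> (v, w) \in f.
Proof. by rewrite /partner; case: pickP => // v' Hv [<-]. Qed.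
End GlueLem.

Theorem proposition2p17 (F : pairset) (HF : iso_invariant F) :
  full_graph_fibration F <->
  ((forall K : graph, normal_subgroup (F K)) /\
   (forall (H K : graph) (iota : vert H -> vert K),
      graph_hom iota -> injective iota ->
      forall b, F H b -> F K (fpmap iota b))).
Proof.
split.
- move=> [[F0 F1 Fns F2 F3] Ffull].
  have NS K : normal_subgroup (F K).
    case: (Fns K) => // Hn; case: (Ffull K) => a Ha; by case: (Hn a).
  split => // H K iota hom inj b Hb.
  pose f := [set p : vert K * vert H | p.1 == iota p.2].
  have ov : vertex_overlap f.
    by move=> p q; rewrite !inE => /eqP-> /eqP->; rewrite inj_eq.
  have Hp w : partner f w = Some (iota w).
    rewrite /partner; case: pickP => [v|]; first by rewrite inE /= => /eqP->.
    by move=> /(_ (iota w)); rewrite inE /= eqxx.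
  pose phi (u : glue_vert f) : vert K :=
    match u with inl v => v | inr x => iota (sval x) end.
  have phiH w : phi (glueH f w) = iota w.
    case: (glueH_spec f w) => [[v [E ->]]|[pf [E ->]]] //=.
    by rewrite Hp in E; case: E.
  have noinr (x : {w | unmatched f w}) : False.
    by case: x => w; rewrite /unmatched Hp.
  have iso : @graph_iso (glue f) K phi.
    split.
      exists inl => //; by case => // x; case: (noinr x).
    move=> [x|x]; last by case: (noinr x).
    move=> [y|y]; last by case: (noinr y).
    rewrite /= /glue_adj; apply/idP/idP => [A|].
      apply/orP; left; apply/existsP; exists x; apply/existsP; exists y.
      by rewrite !eqxx A.
    case/orP => /existsP[x' /existsP[y' /and3P[/eqP e1 /eqP e2 A]]].
      by case: e1 => <-; case: e2 => <-.
    have := phiH x'; rewrite e1 /= => ->.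
    have := phiH y'; rewrite e2 /= => ->.
    exact: hom.
  case: (NS K) => N1 _ _ _.
  have := (@HF (glue f) K phi iso _).1 (F3 K H f ov _ _ N1 Hb).
  congr (F K _); apply: fp_ext.
  rewrite /fpmap /fpmul /fp_of /=.
  by rewrite red_idem red_map -map_comp (eq_map phiH).
- move=> [NS Mono]; split; last by move=> K; exists (fp1 _); case: (NS K).
  split.
  + by case: (NS (edgeless 0)).
  + by case: (NS (edgeless 1)).
  + by right.
  + move=> K phi [bij adjE] b.
    have hom : graph_hom phi by move=> x y; rewrite adjE.
    have inj := bij_inj bij.
    split; first by case=> a Ha ->; exact: Mono.
    move=> Hb; case: bij => g c1 c2; exists (fpmap g b).
      apply: Mono => //; last exact: can_inj c2.
      by move=> x y A; rewrite -adjE !c2.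
    by rewrite fpmap_comp fpmap_id.
  + move=> K H f ov a b Ha Hb.
    case: (NS (glue f)) => _ Hmul _ _; apply: Hmul; apply: Mono => //.
    * move=> x y A; rewrite /= /glue_adj; apply/orP; left.
      by apply/existsP; exists x; apply/existsP; exists y; rewrite !eqxx A.
    * by move=> x y [].
    * move=> x y A; rewrite /= /glue_adj; apply/orP; right.
      by apply/existsP; exists x; apply/existsP; exists y; rewrite !eqxx A.
    * move=> w w'.
      case: (glueH_spec f w) => [[v [E ->]]|[pf [E ->]]];
      case: (glueH_spec f w') => [[v' [E' ->]]|[pf' [E' ->]]] //.
        case=> ev; rewrite -ev in E'.
        have := ov _ _ (partner_in E) (partner_in E'); rewrite /= eqxx.
        by move/esym/eqP.
      by case.
Qed.
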